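(* Let $f:[0,\infty)\to\mathbb{C}$ be smooth with support in $[0,\rho]$ for some $\rho<1$, and for $j\in\mathbb{N}_0$, $t\in(0,1)$ let $$G_{0,j}(t)=\int_{1-t}^{1}u f(u)\,(u^{2}+1-t^{2})^{j}\,\mathrm{d}u.$$ Then for every $r\geq 0$ and $t\in(0,1)$, $$\left[\frac{\mathrm{d}}{\mathrm{d} t}D^{r}G_{0,r}\right](t)=2^{r}(-1)^{r}r!\sum_{m=0}^{r}\sum_{\nu=m}^{r}\sum_{l=\nu}^{r}\frac{1}{2^{\nu-m}m!}\binom{l+1}{\nu+1}\binom{l+\nu-m}{\nu-m}\frac{1}{t^{l}}\frac{(1-t)^{\nu+1}}{t^{\nu-m}}f^{(m)}(1-t).$$
   Context: $D$ denotes the operator $(D\varphi)(t)=\frac{1}{t}\varphi'(t)$ and $D^{r}$ its $r$-fold iterate ($D^0$ is the identity). $\binom{a}{b}=0$ if $b>a$ or $b<0$. *)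

(* Defs.v *)
From Stdlib Require Import Reals.
From Coquelicot Require Import Coquelicot.
Open Scope R_scope.

Definition binom (a b : nat) : R :=
  if (b <=? a)%nat then Binomial.C a b else 0.

(* f : [0,oo) -> C is smooth: real and imaginary parts are infinitely
   differentiable at every point of (0,oo) (only values on (0,1] matter). *)
Definition smooth_pos (f : R -> C) : Prop :=
  forall (n : nat) (x : R), 0 < x ->
    ex_derive_n (fun y => Re (f y)) n x /\ ex_derive_n (fun y => Im (f y)) n x.

Definition Cderive (phi : R -> C) (t : R) : C :=
  (Derive (fun y => Re (phi y)) t, Derive (fun y => Im (phi y)) t).

Definition Cderive_n (phi : R -> C) (n : nat) (t : R) : C :=
  (Derive_n (fun y => Re (phi y)) n t, Derive_n (fun y => Im (phi y)) n t).

Definition Dop (phi : R -> C) : R -> C :=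
  fun t => scal (/ t) (Cderive phi t).

Definition Dpow (r : nat) (phi : R -> C) : R -> C := Nat.iter r Dop phi.

Definition G0 (f : R -> C) (j : nat) (t : R) : C :=
  RInt (V := C_R_CompleteNormedModule)
    (fun u => scal (u * (u ^ 2 + 1 - t ^ 2) ^ j) (f u)) (1 - t) 1.

Definition rhs35 (f : R -> C) (r : nat) (t : R) : C :=
  scal (2 ^ r * (-1) ^ r * INR (Factorial.fact r))
    (sum_n_m (G := C_AbelianMonoid) (fun m =>
      sum_n_m (G := C_AbelianMonoid) (fun nu =>
        sum_n_m (G := C_AbelianMonoid) (fun l =>
          scal (/ (2 ^ (nu - m) * INR (Factorial.fact m))
                * binom (l + 1) (nu + 1)
                * binom (l + nu - m) (nu - m)
                * / (t ^ l)
                * ((1 - t) ^ (nu + 1) / t ^ (nu - m)))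
               (Cderive_n f m (1 - t)))
        nu r)
      m r)
    0 r).

(* Main.v *)
Require Import Defs.
From Stdlib Require Import Reals Lia Lra Arith Factorial.
From Coquelicot Require Import Coquelicot.
Open Scope R_scope.

Fixpoint sm (N : nat) (f : nat -> R) : R :=
  match N with O => f O | S n => sm n f + f (S n) end.

Lemma sm_ext N f g : (forall i, (i <= N)%nat -> f i = g i) -> sm N f = sm N g.
Proof. induction N; intros H; simpl. apply H; lia. rewrite IHN. rewrite H. auto. lia. intros; apply H; lia. Qed.

Lemma sm_plus N f g : sm N (fun i => f i + g i) = sm N f + sm N g.
Proof. induction N; simpl. auto. rewrite IHN; ring. Qed.

Lemma sm_scal N c f : sm N (fun i => c * f i) = c * sm N f.
Proof. induction N; simpl. auto. rewrite IHN; ring. Qed.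

Lemma sm_minus N f g : sm N (fun i => f i - g i) = sm N f - sm N g.
Proof. induction N; simpl. auto. rewrite IHN; ring. Qed.

Lemma sm_opp N f : sm N (fun i => - f i) = - sm N f.
Proof. induction N; simpl. auto. rewrite IHN; ring. Qed.

Lemma sm_zero N f : (forall i, (i <= N)%nat -> f i = 0) -> sm N f = 0.
Proof. intros H. rewrite (sm_ext N f (fun _ => 0)). induction N; simpl. auto. rewrite IHN; [ring|auto]. auto. Qed.

Lemma sm_swap A B f : sm A (fun i => sm B (fun j => f i j)) = sm B (fun j => sm A (fun i => f i j)).
Proof. induction A; simpl. auto. rewrite IHA. rewrite <- sm_plus. auto. Qed.

Lemma sm_Sl N b : sm (S N) b = b O + sm N (fun i => b (S i)).
Proof. induction N. simpl. ring. change (sm (S (S N)) b) with (sm (S N) b + b (S (S N))). rewrite IHN. simpl. ring. Qed.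

Lemma sm_shift N a g : a N = 0 ->
  sm N (fun i => a i * g (S i)) = sm N (fun i => match i with O => 0 | S i' => a i' * g i end).
Proof. intros H.
  set (b := fun i => match i with O => 0 | S i' => a i' * g i end).
  transitivity (sm (S N) b). rewrite sm_Sl. unfold b at 1. rewrite Rplus_0_l. reflexivity.
  change (sm (S N) b) with (sm N b + b (S N)). unfold b at 2. rewrite H. ring. Qed.

Lemma sm_trunc r l f : (l <= r)%nat -> (forall i, (l < i <= r)%nat -> f i = 0) -> sm r f = sm l f.
Proof. induction r; intros Hl H. replace l with O by lia. auto.
  destruct (Nat.eq_dec l (S r)). subst; auto.
  simpl. rewrite H by lia. rewrite IHr by (try lia; intros; apply H; lia). ring. Qed.

Lemma sm_S N f : sm (S N) f = sm N f + f (S N).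
Proof. reflexivity. Qed.

Lemma sm_rev l f : sm l f = sm l (fun i => f (l - i)%nat).
Proof. revert f; induction l; intros f. simpl. auto.
  transitivity (f O + sm l (fun i => f (S (l - i)))).
  rewrite sm_Sl, (IHl (fun i => f (S i))). reflexivity.
  rewrite sm_S. replace (S l - S l)%nat with O by lia. rewrite Rplus_comm. f_equal.
  apply sm_ext. intros i Hi. f_equal. lia. Qed.

Lemma sum_n_m_sm (f : nat -> R) a b : (a <= S b)%nat ->
  sum_n_m (G:=R_AbelianMonoid) f a b = sm b (fun i => if (a <=? i)%nat then f i else 0).
Proof. induction b; intros H.
  - destruct a. rewrite (sum_n_n (G:=R_AbelianMonoid)). reflexivity.
    destruct a. rewrite (sum_n_m_zero (G:=R_AbelianMonoid)) by lia. reflexivity. lia.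
  - destruct (Nat.eq_dec a (S (S b))). subst. rewrite (sum_n_m_zero (G:=R_AbelianMonoid)) by lia.
    rewrite sm_zero. reflexivity.
    intros i Hi. destruct (Nat.leb_spec (S (S b)) i). lia. auto.
    rewrite (sum_n_Sm (G:=R_AbelianMonoid)) by lia. rewrite IHb by lia. rewrite sm_S.
    destruct (Nat.leb_spec a (S b)). reflexivity. lia.
Qed.

Fixpoint ff (p i : nat) : R := match i with O => 1 | S i' => ff p i' * INR (p - i') end.

Lemma ff_closed p i : (i <= p)%nat -> ff p i = INR (fact p) / INR (fact (p - i)).
Proof. induction i; intros H. simpl. rewrite Nat.sub_0_r. field. apply INR_fact_neq_0.
  simpl ff. rewrite IHi by lia. replace (p - i)%nat with (S (p - S i)) by lia.
  rewrite fact_simpl, mult_INR. field. split. apply INR_fact_neq_0. apply not_0_INR. lia. Qed.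

Lemma ff_zero p i : (p < i)%nat -> ff p i = 0.
Proof. induction i; intros H. lia. simpl. destruct (Nat.eq_dec i p). subst. rewrite Nat.sub_diag. simpl. ring.
  rewrite IHi by lia. ring. Qed.

Definition Wc (d i m : nat) : R :=
  INR (fact (i + m + 2 * d)) / (INR (fact i) * INR (fact m) * 2 ^ d * INR (fact d)).

Definition W (n i m : nat) : R :=
  if (i + m <=? n)%nat then Wc (n - (i + m)) i m else 0.

Ltac posall := repeat match goal with n : nat |- _ =>
  lazymatch goal with _ : 0 <= INR n |- _ => fail | _ => pose proof (pos_INR n) end end.
Ltac nz := repeat split; first [apply INR_fact_neq_0 | (apply pow_nonzero; lra) | (apply Rgt_not_eq; posall; rewrite ?plus_INR, ?mult_INR, ?S_INR in *; simpl in *; lra) | idtac].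

Lemma fact_S_R k : INR (fact (S k)) = INR (S k) * INR (fact k).
Proof. rewrite fact_simpl, mult_INR. reflexivity. Qed.

Lemma Wc_S d i m : Wc (S d) i m = Wc d i m * (INR (i+m+2*d) + 1) * (INR (i+m+2*d) + 2) / (2 * (INR d + 1)).
Proof. unfold Wc. replace (i + m + 2 * S d)%nat with (S (S (i+m+2*d))) by lia.
  rewrite !fact_S_R, !S_INR. simpl pow. field. nz. Qed.

Lemma Wc_Si d i m : Wc (S d) i m = Wc d (S i) m * (INR (S i + m + 2*d) + 1) * INR (S i) / (2 * (INR d + 1)).
Proof. unfold Wc. replace (i + m + 2 * S d)%nat with (S (S i + m + 2*d)) by lia.
  rewrite !fact_S_R. simpl pow. rewrite !S_INR. field. nz. Qed.

Lemma Wc_Sm d i m : Wc (S d) i m = Wc d i (S m) * (INR (i + S m + 2*d) + 1) * INR (S m) / (2 * (INR d + 1)).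
Proof. unfold Wc. replace (i + m + 2 * S d)%nat with (S (i + S m + 2*d)) by lia.
  rewrite !fact_S_R. simpl pow. rewrite !S_INR. field. nz. Qed.

Ltac inr := repeat first [rewrite plus_INR | rewrite mult_INR | rewrite S_INR].
Ltac lebs := repeat match goal with |- context [(?a <=? ?b)%nat] =>
  first [rewrite (proj2 (Nat.leb_le a b)) by lia | rewrite (proj2 (Nat.leb_gt a b)) by lia] end.

Lemma W_rec n i m : W (S n) i m = (INR (2*n+1) - INR (i+m)) * W n i m
  + (match i with O => 0 | S i' => W n i' m end)
  + (match m with O => 0 | S m' => W n i m' end).
Proof.
  destruct (le_lt_dec (i+m) n) as [Hq|Hq].
  - destruct (Nat.le_exists_sub (i+m) n Hq) as [d [Hd _]]. subst n.
    unfold W. lebs.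
    replace (S (d + (i+m)) - (i+m))%nat with (S d) by lia.
    replace (d + (i+m) - (i+m))%nat with d by lia.
    rewrite Wc_S.
    destruct i as [|i']; destruct m as [|m']; lebs;
    try (replace (d + (S i' + 0) - (i' + 0))%nat with (S d) by lia);
    try (replace (d + (0 + S m') - (0 + m'))%nat with (S d) by lia);
    try (replace (d + (S i' + S m') - (i' + S m'))%nat with (S d) by lia);
    try (replace (d + (S i' + S m') - (S i' + m'))%nat with (S d) by lia);
    try rewrite (Wc_Si d i'); try rewrite (Wc_Sm d _ m');
    inr; simpl INR; field; nz.
  - destruct (Nat.eq_dec (i+m) (S n)) as [He|He].
    + unfold W. lebs. replace (S n - (i+m))%nat with O by lia.
      destruct i as [|i']; destruct m as [|m']; try lia; lebs.
      * replace n with m' in * by lia. replace (m' - (0 + m'))%nat with O by lia.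
        unfold Wc. simpl Nat.mul. rewrite !Nat.add_0_r. simpl pow. simpl Nat.add.
        rewrite !fact_S_R. inr. simpl INR. field. nz.
      * replace n with i' in * by lia. replace (i' - (i' + 0))%nat with O by lia.
        unfold Wc. simpl Nat.mul. rewrite !Nat.add_0_r. simpl pow.
        rewrite !fact_S_R. inr. simpl INR. field. nz.
      * replace n with (S (i'+m')) in * by lia.
        replace (S (i' + m') - (i' + S m'))%nat with O by lia.
        replace (S (i' + m') - (S i' + m'))%nat with O by lia.
        unfold Wc. simpl Nat.mul. rewrite !Nat.add_0_r. simpl pow.
        replace (S i' + S m')%nat with (S (S (i'+m'))) by lia.
        replace (i' + S m')%nat with (S (i'+m')) by lia.
        replace (S i' + m')%nat with (S (i'+m')) by lia.
        rewrite !fact_S_R. inr. simpl INR. field. nz.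
    + unfold W. destruct i as [|i']; destruct m as [|m']; try lia; lebs; ring.
Qed.


Definition K (p n i m : nat) : R := (-1) ^ n * ff p i * W n i m.

Lemma K_rec p n i m : K p (S n) i m = K p n i m * (INR (i+m) - INR (2*n+1))
  - (match i with O => 0 | S i' => K p n i' m * INR (p - i') end)
  - (match m with O => 0 | S m' => K p n i m' end).
Proof. unfold K. rewrite W_rec. destruct i; destruct m; simpl ff; simpl pow; ring. Qed.

Lemma W_out n i m : (n < i + m)%nat -> W n i m = 0.
Proof. intros H; unfold W; lebs; auto. Qed.

Lemma K_out p n i m : (n < i + m)%nat -> K p n i m = 0.
Proof. intros H; unfold K; rewrite W_out; auto; ring. Qed.

Lemma K_00 p : K p 0 0 0 = 1.
Proof. unfold K, W, Wc. simpl. field. Qed.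

Lemma m1sq l : (-1) ^ l * (-1) ^ l = 1.
Proof. rewrite <- Rpow_mult_distr. replace (-1 * -1) with 1 by ring. apply pow1. Qed.

Lemma K_closed l nu m : (m <= nu)%nat -> (nu <= l)%nat ->
  (-1) ^ l / INR (fact l) * K (S l) l (l - nu) m =
  / (2 ^ (nu - m) * INR (fact m)) * binom (l + 1) (nu + 1) * binom (l + nu - m) (nu - m).
Proof. intros H1 H2.
  destruct (Nat.le_exists_sub m nu H1) as [d [Hd _]]. subst nu.
  destruct (Nat.le_exists_sub (d+m) l H2) as [e [He _]]. subst l.
  unfold K, binom. lebs.
  replace (e + (d + m) - (d + m))%nat with e by lia.
  replace (d + m - m)%nat with d by lia.
  rewrite ff_closed by lia.
  unfold W. lebs. replace (e + (d + m) - (e + m))%nat with d by lia.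
  unfold Wc, Binomial.C.
  replace (S (e + (d + m)) - e)%nat with (d + m + 1)%nat by lia.
  replace (e + (d + m) + 1 - (d + m + 1))%nat with e by lia.
  replace (e + (d + m) + (d + m) - m - d)%nat with (e + (d + m))%nat by lia.
  replace (e + (d + m) + (d + m) - m)%nat with (e + m + 2 * d)%nat by lia.
  replace (e + (d + m) + 1)%nat with (S (e + (d + m))) by lia.
  replace ((-1) ^ (e + (d + m)) / INR (fact (e + (d + m))) * ((-1) ^ (e + (d + m)) *
   (INR (fact (S (e + (d + m)))) / INR (fact (d + m + 1))) *
   (INR (fact (e + m + 2 * d)) / (INR (fact e) * INR (fact m) * 2 ^ d * INR (fact d)))))
  with (((-1) ^ (e + (d + m)) * (-1) ^ (e + (d + m))) / INR (fact (e + (d + m))) *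
   (INR (fact (S (e + (d + m)))) / INR (fact (d + m + 1))) *
   (INR (fact (e + m + 2 * d)) / (INR (fact e) * INR (fact m) * 2 ^ d * INR (fact d)))) by (field; nz).
  rewrite m1sq. field. nz.
Qed.


Lemma loc_between (a b t : R) : a < t < b -> locally t (fun y => a < y < b).
Proof. intros [H1 H2].
  assert (He : 0 < Rmin (t - a) (b - t)) by (apply Rmin_pos; lra).
  exists (mkposreal _ He). intros y Hy. unfold ball in Hy; simpl in Hy. unfold AbsRing_ball, abs, minus, plus, opp in Hy; simpl in Hy.
  pose proof (Rmin_l (t-a) (b-t)). pose proof (Rmin_r (t-a) (b-t)).
  apply Rabs_def2 in Hy. lra. Qed.

Lemma loc_pos (t : R) : 0 < t -> locally t (fun y => 0 < y).
Proof. intros H. exists (mkposreal _ H). intros y Hy. unfold ball in Hy; simpl in Hy. unfold AbsRing_ball, abs, minus, plus, opp in Hy; simpl in Hy.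
  apply Rabs_def2 in Hy. lra. Qed.

Definition Gw (w : R -> R) (j : nat) (t : R) : R :=
  RInt (fun u => w u * (u ^ 2 + 1 - t ^ 2) ^ j) (1 - t) 1.

Definition contpos (w : R -> R) := forall x, 0 < x -> continuous w x.

Lemma cont_integrand w j t x : contpos w -> 0 < x -> continuous (fun u => w u * (u ^ 2 + 1 - t ^ 2) ^ j) x.
Proof. intros Hw Hx. apply (continuous_mult (K:=R_AbsRing) w (fun u => (u ^ 2 + 1 - t ^ 2) ^ j)).
  apply Hw; auto. apply (ex_derive_continuous (K:=R_AbsRing) (V:=R_NormedModule)). auto_derive. auto. Qed.

Lemma exR w j t a b : contpos w -> 0 < a -> 0 < b -> ex_RInt (fun u => w u * (u ^ 2 + 1 - t ^ 2) ^ j) a b.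
Proof. intros Hw Ha Hb. apply (ex_RInt_continuous (V:=R_CompleteNormedModule)). intros z Hz.
  apply cont_integrand; auto. assert (0 < Rmin a b) by (apply Rmin_pos; lra). lra. Qed.

Lemma contpos_u2 w : contpos w -> contpos (fun u => w u * u ^ 2).
Proof. intros Hw x Hx. apply (continuous_mult (K:=R_AbsRing) w (fun u => u ^ 2)). auto.
  apply (ex_derive_continuous (K:=R_AbsRing) (V:=R_NormedModule)). auto_derive. auto. Qed.

Lemma Gw_S w j t : contpos w -> t < 1 ->
  Gw w (S j) t = Gw (fun u => w u * u ^ 2) j t + (1 - t ^ 2) * Gw w j t.
Proof. intros Hw Ht. unfold Gw.
  rewrite <- (RInt_scal (V:=R_CompleteNormedModule)) by (apply exR; auto; lra).
  rewrite <- (RInt_plus (V:=R_CompleteNormedModule)).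
  apply RInt_ext. intros x _. unfold plus, scal; simpl. unfold mult; simpl. ring.
  replace (fun u => w u * u ^ 2 * (u ^ 2 + 1 - t ^ 2) ^ j) with (fun u => (fun v => w v * v ^ 2) u * (u ^ 2 + 1 - t ^ 2) ^ j) by reflexivity.
  apply exR; auto. apply contpos_u2; auto. lra. lra.
  apply (ex_RInt_scal (V:=R_CompleteNormedModule)). apply exR; auto; lra.
Qed.

Lemma Gw_base w t : contpos w -> 0 < t < 1 -> is_derive (Gw w 0) t (w (1 - t)).
Proof. intros Hw Ht. unfold Gw.
  set (g := fun u => w u * (u ^ 2 + 1 - t ^ 2) ^ 0).
  change (is_derive (fun t0 => RInt g (1 - t0) 1) t (w (1 - t))).
  replace (w (1 - t)) with (scal (-1) (opp (g (1 - t)))).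
  apply (is_derive_comp (fun a => RInt g a 1) (fun t0 => 1 - t0)).
  apply (is_derive_RInt' (V:=R_NormedModule) g (fun a => RInt g a 1) (1 - t) 1).
  apply filter_imp with (2 := loc_pos (1 - t) ltac:(lra)). intros a Ha.
  apply (RInt_correct (V:=R_CompleteNormedModule)). apply exR; auto; lra.
  apply cont_integrand; auto; lra.
  auto_derive. auto. ring.
  unfold g, scal, opp; simpl. unfold mult; simpl. ring.
Qed.

Lemma is_derive_val (f : R -> R) x l l' : is_derive f x l -> l = l' -> is_derive f x l'.
Proof. intros H E; subst; auto. Qed.

Lemma Gw_deriv j : forall w, contpos w -> forall t, 0 < t < 1 ->
  is_derive (Gw w j) t (w (1 - t) * (2 * (1 - t)) ^ j - 2 * INR j * t * Gw w (pred j) t).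
Proof. induction j; intros w Hw t Ht.
  - eapply is_derive_val. apply Gw_base; auto. simpl. ring.
  - pose proof (IHj (fun u => w u * u ^ 2) (contpos_u2 w Hw) t Ht) as H1.
    pose proof (IHj w Hw t Ht) as H2.
    assert (H3 : is_derive (fun y => 1 - y ^ 2) t (- 2 * t)) by (auto_derive; auto; ring).
    pose proof (is_derive_plus _ _ _ _ _ H1 (is_derive_mult _ _ _ _ _ H3 H2 Rmult_comm)) as H.
    eapply is_derive_val. eapply is_derive_ext_loc; [ | exact H].
    apply filter_imp with (2 := loc_between 0 1 t Ht). intros y Hy. simpl.
    rewrite Gw_S; auto. lra.
    simpl pred. unfold plus, mult; simpl. destruct j.
    + simpl. ring.
    + simpl pred. rewrite (Gw_S w j t Hw) by lra. rewrite !S_INR. simpl. ring.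
Qed.


Definition smoothR (h : R -> R) := forall n x, 0 < x -> ex_derive_n h n x.

Lemma term_deriv h (Hs : smoothR h) a A b m t : 0 < t < 1 ->
  is_derive (fun y => y ^ a / y ^ A * (1 - y) ^ b * Derive_n h m (1 - y)) t
   (t * ((INR a - INR A) * (t ^ a / t ^ (A + 2)) * (1 - t) ^ b * Derive_n h m (1 - t)
         - INR b * (t ^ (S a) / t ^ (A + 2)) * (1 - t) ^ (pred b) * Derive_n h m (1 - t)
         - t ^ (S a) / t ^ (A + 2) * (1 - t) ^ b * Derive_n h (S m) (1 - t))).
Proof. intros Ht.
  assert (Hd : ex_derive (Derive_n h m) (1 - t)) by (apply (Hs (S m)); lra).
  auto_derive.
  - repeat split; auto. apply pow_nonzero; lra.
  - replace (Derive (fun x => Derive_n h m x) (1 + - t)) with (Derive_n h (S m) (1 - t)) by (simpl; f_equal; ring).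
    replace (1 + - t) with (1 - t) by ring.
    rewrite pow_add. assert (HA : forall k, t ^ k <> 0) by (intro; apply pow_nonzero; lra).
    destruct a; destruct A; destruct b; simpl pred; simpl INR; rewrite ?S_INR; simpl pow; field; repeat split; auto; lra.
Qed.


Lemma is_derive_sm N (f : nat -> R -> R) df t :
  (forall i, (i <= N)%nat -> is_derive (f i) t (df i)) ->
  is_derive (fun y => sm N (fun i => f i y)) t (sm N df).
Proof. induction N; intros H; simpl. apply H; lia.
  apply (is_derive_plus (K:=R_AbsRing) (V:=R_NormedModule) (fun y => sm N (fun i => f i y)) (f (S N))).
  apply IHN; intros; apply H; lia. apply H; lia. Qed.

Definition term h p n i m t := t ^ (i + m) / t ^ (2 * n + 1) * (1 - t) ^ (p - i) * Derive_n h m (1 - t).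
Definition Bf h N p n t := sm N (fun i => sm N (fun m => K p n i m * term h p n i m t)).

Lemma shift_i N p n (T : nat -> nat -> R) : (n < N)%nat ->
  sm N (fun i => sm N (fun m => K p n i m * INR (p - i) * T (S i) m)) =
  sm N (fun i => sm N (fun m => (match i with O => 0 | S i' => K p n i' m * INR (p - i') end) * T i m)).
Proof. intros HN. rewrite sm_swap. rewrite (sm_swap N N (fun i m => _ * T i m)).
  apply sm_ext. intros m Hm.
  rewrite (sm_shift N (fun i => K p n i m * INR (p - i)) (fun i => T i m)).
  apply sm_ext. intros i Hi. destruct i; ring.
  rewrite K_out by lia. ring. Qed.

Lemma shift_m N p n (T : nat -> nat -> R) : (n < N)%nat ->
  sm N (fun i => sm N (fun m => K p n i m * T i (S m))) =
  sm N (fun i => sm N (fun m => (match m with O => 0 | S m' => K p n i m' end) * T i m)).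
Proof. intros HN. apply sm_ext. intros i Hi.
  rewrite (sm_shift N (fun m => K p n i m) (fun m => T i m)).
  apply sm_ext. intros m Hm. destruct m; ring.
  rewrite K_out by lia. ring. Qed.

Lemma Dstep h (Hs : smoothR h) N p n t : (n < N)%nat -> 0 < t < 1 ->
  is_derive (Bf h N p n) t (t * Bf h N p (S n) t).
Proof. intros HN Ht. unfold Bf.
  set (T := fun i m => term h p (S n) i m t).
  eapply is_derive_val.
  apply is_derive_sm; intros i Hi. apply is_derive_sm; intros m Hm.
  apply is_derive_scal. unfold term. apply term_deriv; auto.
  transitivity (t * (sm N (fun i => sm N (fun m => K p n i m * (INR (i + m) - INR (2 * n + 1)) * T i m))
     - sm N (fun i => sm N (fun m => K p n i m * INR (p - i) * T (S i) m))
     - sm N (fun i => sm N (fun m => K p n i m * T i (S m))))).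
  - rewrite <- !sm_minus, <- sm_scal. apply sm_ext; intros i Hi.
    rewrite <- !sm_minus, <- sm_scal. apply sm_ext; intros m Hm.
    unfold T, term.
    replace (2 * S n + 1)%nat with (2 * n + 1 + 2)%nat by lia.
    replace (S i + m)%nat with (S (i + m)) by lia.
    replace (i + S m)%nat with (S (i + m)) by lia.
    replace (p - S i)%nat with (pred (p - i)) by lia. ring.
  - rewrite shift_i, shift_m by auto. f_equal.
    rewrite <- !sm_minus. apply sm_ext; intros i Hi.
    rewrite <- !sm_minus. apply sm_ext; intros m Hm.
    fold (T i m). rewrite K_rec. ring.
Qed.


Definition DR (phi : R -> R) (t : R) : R := / t * Derive phi t.
Definition DpR (k : nat) (phi : R -> R) : R -> R := Nat.iter k DR phi.

Definition Gh h j t := Gw (fun u => u * h u) j t.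

Lemma smooth_contpos h : smoothR h -> contpos (fun u => u * h u).
Proof. intros Hs x Hx. apply (continuous_mult (K:=R_AbsRing) (fun u => u) h).
  apply continuous_id. apply (ex_derive_continuous (K:=R_AbsRing) (V:=R_NormedModule)).
  apply (Hs 1%nat x Hx). Qed.

Lemma Bf0 h N p t : 0 < t -> Bf h N p 0 t = (1 - t) ^ p * Derive_n h 0 (1 - t) / t.
Proof. intros Ht. unfold Bf.
  rewrite (sm_trunc N 0). simpl sm. rewrite (sm_trunc N 0). simpl sm.
  rewrite K_00. unfold term. simpl. rewrite Nat.sub_0_r. field. lra. lia.
  intros m Hm. rewrite K_out by lia. ring. lia.
  intros i Hi. apply sm_zero. intros m Hm. rewrite K_out by lia. ring.
Qed.

Definition Ek h N j k t := sm k (fun i => (-2) ^ i * ff j i * 2 ^ (j - i) * Bf h N (j - i + 1) (k - i) t)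
   + (-2) ^ (S k) * ff j (S k) * Gh h (j - S k) t.

Lemma claim h (Hs : smoothR h) N k : (k < N)%nat -> forall j t, 0 < t < 1 ->
  DpR (S k) (Gh h j) t = Ek h N j k t.
Proof. induction k; intros HN j t Ht.
  - unfold DpR, Ek. simpl Nat.iter. unfold DR, Gh.
    change (fun t0 => Gw (fun u => u * h u) j t0) with (Gw (fun u => u * h u) j).
    rewrite (is_derive_unique _ _ _ (Gw_deriv j _ (smooth_contpos h Hs) t Ht)).
    simpl sm. rewrite Bf0 by lra. unfold Gh. simpl ff. rewrite Nat.sub_0_r.
    replace (j - 1)%nat with (pred j) by lia. simpl Derive_n.
    rewrite Rpow_mult_distr. rewrite pow_add. simpl. field. lra.
  - assert (Hloc : locally t (fun y => DpR (S k) (Gh h j) y = Ek h N j k y)).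
    { apply filter_imp with (2 := loc_between 0 1 t Ht). intros y Hy. apply IHk; auto. lia. }
    change (DpR (S (S k)) (Gh h j) t) with (/ t * Derive (DpR (S k) (Gh h j)) t).
    rewrite (Derive_ext_loc _ _ t Hloc).
    assert (Hd : is_derive (Ek h N j k) t
      (sm k (fun i => (-2) ^ i * ff j i * 2 ^ (j - i) * (t * Bf h N (j - i + 1) (S (k - i)) t))
       + (-2) ^ (S k) * ff j (S k) * ((1 - t) * h (1 - t) * (2 * (1 - t)) ^ (j - S k)
           - 2 * INR (j - S k) * t * Gh h (pred (j - S k)) t))).
    { unfold Ek. apply (is_derive_plus (K:=R_AbsRing) (V:=R_NormedModule)).
      apply is_derive_sm. intros i Hi. apply is_derive_scal. apply Dstep; auto. lia.
      apply is_derive_scal. unfold Gh. apply (Gw_deriv _ (fun u => u * h u) (smooth_contpos h Hs) t Ht). }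
    rewrite (is_derive_unique _ _ _ Hd).
    unfold Ek. rewrite sm_S.
    replace (S k - S k)%nat with O by lia. rewrite Bf0 by lra.
    replace (pred (j - S k)) with (j - S (S k))%nat by lia.
    rewrite (sm_ext k (fun i => (-2) ^ i * ff j i * 2 ^ (j - i) * Bf h N (j - i + 1) (S k - i) t)
               (fun i => (-2) ^ i * ff j i * 2 ^ (j - i) * Bf h N (j - i + 1) (S (k - i)) t)).
    2: { intros i Hi. replace (S k - i)%nat with (S (k - i)) by lia. reflexivity. }
    rewrite (sm_ext k (fun i => (-2) ^ i * ff j i * 2 ^ (j - i) * (t * Bf h N (j - i + 1) (S (k - i)) t))
               (fun i => t * ((-2) ^ i * ff j i * 2 ^ (j - i) * Bf h N (j - i + 1) (S (k - i)) t))).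
    2: { intros i Hi. ring. }
    rewrite sm_scal.
    replace (j - S k + 1)%nat with (S (j - S k)) by lia.
    change (ff j (S (S k))) with (ff j (S k) * INR (j - S k)).
    simpl Derive_n. rewrite Rpow_mult_distr. simpl pow. field. lra.
Qed.


Definition Xc (m nu l : nat) (t : R) : R :=
  / (2 ^ (nu - m) * INR (fact m)) * binom (l + 1) (nu + 1) * binom (l + nu - m) (nu - m)
   * / (t ^ l) * ((1 - t) ^ (nu + 1) / t ^ (nu - m)).

Lemma coef_id r l : (l <= r)%nat ->
  (-2) ^ (r - l) * ff r (r - l) * 2 ^ (r - (r - l)) = 2 ^ r * (-1) ^ r * INR (fact r) * ((-1) ^ l / INR (fact l)).
Proof. intros H. destruct (Nat.le_exists_sub l r H) as [d [Hd _]]. subst r.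
  replace (d + l - l)%nat with d by lia. replace (d + l - d)%nat with l by lia.
  rewrite ff_closed by lia. replace (d + l - d)%nat with l by lia.
  replace (-2) with (-1 * 2) by ring. rewrite Rpow_mult_distr, !pow_add.
  transitivity ((-1) ^ d * 2 ^ d * INR (fact (d + l)) / INR (fact l) * 2 ^ l * ((-1) ^ l * (-1) ^ l)).
  rewrite m1sq. field. apply INR_fact_neq_0.
  field. apply INR_fact_neq_0.
Qed.

Lemma reindex r l (y : nat -> R) : (l <= r)%nat -> (forall i, (l < i)%nat -> y i = 0) ->
  sm r y = sm r (fun nu => if (nu <=? l)%nat then y (l - nu)%nat else 0).
Proof. intros H Hy. rewrite (sm_trunc r l y H) by (intros; apply Hy; lia).
  rewrite sm_rev. symmetry. rewrite (sm_trunc r l) by (auto; intros i Hi; lebs; auto).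
  apply sm_ext. intros i Hi. lebs. auto. Qed.

Lemma real_main h (Hs : smoothR h) r t : 0 < t < 1 ->
  Derive (DpR r (Gh h r)) t = 2 ^ r * (-1) ^ r * INR (fact r) *
    sum_n_m (G:=R_AbelianMonoid) (fun m => sum_n_m (G:=R_AbelianMonoid) (fun nu => sum_n_m (G:=R_AbelianMonoid)
      (fun l => Xc m nu l t * Derive_n h m (1 - t)) nu r) m r) 0 r.
Proof. intros Ht.
  set (c := 2 ^ r * (-1) ^ r * INR (fact r)).
  assert (E1 : Derive (DpR r (Gh h r)) t = t * DpR (S r) (Gh h r) t).
  { change (DpR (S r) (Gh h r) t) with (/ t * Derive (DpR r (Gh h r)) t). field. lra. }
  rewrite E1, (claim h Hs (S r) r ltac:(lia) r t Ht). unfold Ek.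
  rewrite (ff_zero r (S r)) by lia. rewrite Rmult_0_r, Rmult_0_l, Rplus_0_r.
  rewrite sm_rev.
  set (Y := fun l i m => K (l + 1) l i m * (t * term h (l + 1) l i m t)).
  transitivity (c * sm r (fun l => ((-1) ^ l / INR (fact l)) *
      sm r (fun nu => if (nu <=? l)%nat then sm r (fun m => Y l (l - nu)%nat m) else 0))).
  { rewrite <- sm_scal, <- sm_scal. apply sm_ext. intros l Hl.
    replace (r - (r - l))%nat with l by lia.
    rewrite <- (reindex r l (fun i => sm r (fun m => Y l i m))); auto.
    2: { intros i Hi. apply sm_zero. intros m Hm. unfold Y. rewrite K_out by lia. ring. }
    unfold Bf. rewrite (sm_trunc (S r) r) by (try lia; intros i Hi; apply sm_zero; intros m Hm; rewrite K_out by lia; ring).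
    rewrite <- (Rmult_assoc c). unfold c. rewrite <- (coef_id r l Hl).
    replace (r - (r - l))%nat with l by lia.
    rewrite <- Rmult_assoc, (Rmult_comm t), Rmult_assoc. f_equal.
    rewrite <- sm_scal. apply sm_ext. intros i Hi.
    rewrite (sm_trunc (S r) r) by (try lia; intros m Hm; rewrite K_out by lia; ring).
    rewrite <- sm_scal. apply sm_ext. intros m Hm.
    unfold Y. ring. }
  f_equal.
  assert (R1 : sum_n_m (G:=R_AbelianMonoid) (fun m => sum_n_m (G:=R_AbelianMonoid) (fun nu => sum_n_m (G:=R_AbelianMonoid)
      (fun l => Xc m nu l t * Derive_n h m (1 - t)) nu r) m r) 0 r =
    sm r (fun m => sm r (fun nu => if (m <=? nu)%nat then
        sm r (fun l => if (nu <=? l)%nat then Xc m nu l t * Derive_n h m (1 - t) else 0) else 0))).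
  { rewrite sum_n_m_sm by lia. apply sm_ext. intros m Hm. simpl (0 <=? m)%nat. cbv iota.
    rewrite sum_n_m_sm by lia. apply sm_ext. intros nu Hnu.
    destruct (m <=? nu)%nat; auto. apply sum_n_m_sm. lia. }
  rewrite R1. clear R1.
  pose (Z1 := fun l nu m => (-1) ^ l / INR (fact l) * (if (nu <=? l)%nat then Y l (l - nu)%nat m else 0)).
  transitivity (sm r (fun l => sm r (fun nu => sm r (fun m => Z1 l nu m)))).
  { apply sm_ext. intros l Hl. rewrite <- sm_scal. apply sm_ext. intros nu Hnu. unfold Z1.
    destruct (nu <=? l)%nat. symmetry; apply sm_scal. rewrite Rmult_0_r. symmetry. apply sm_zero. intros; ring. }
  transitivity (sm r (fun l => sm r (fun m => sm r (fun nu => Z1 l nu m)))).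
  { apply sm_ext. intros l Hl. apply sm_swap. }
  rewrite sm_swap. apply sm_ext. intros m Hm. rewrite sm_swap. apply sm_ext. intros nu Hnu.
  unfold Z1.
  destruct (Nat.leb_spec m nu).
  - apply sm_ext. intros l Hl. destruct (Nat.leb_spec nu l).
    + unfold Y. rewrite <- Rmult_assoc, (Nat.add_1_r l), K_closed by auto.
      unfold term, Xc. rewrite Nat.add_1_r.
      replace (S l - (l - nu))%nat with (nu + 1)%nat by lia.
      set (q := (l - nu + m)%nat). set (d := (nu - m)%nat).
      replace (2 * l + 1)%nat with (l + d + S q)%nat by (unfold q, d; lia).
      rewrite !pow_add. simpl pow.
      assert (forall k, t ^ k <> 0) by (intros; apply pow_nonzero; lra).
      field. repeat split; first [apply INR_fact_neq_0 | (apply pow_nonzero; lra) | solve [auto] | (apply Rgt_not_eq; lra)].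
    + ring.
  - apply sm_zero. intros l Hl. destruct (nu <=? l)%nat eqn:E.
    apply Nat.leb_le in E. unfold Y. rewrite K_out by lia. ring. ring.
Qed.


Lemma Re_Dpow k (phi : R -> C) y : Re (Dpow k phi y) = DpR k (fun z => Re (phi z)) y.
Proof. revert y; induction k; intros y. reflexivity.
  change (Re (Dop (Dpow k phi) y) = / y * Derive (DpR k (fun z => Re (phi z))) y).
  unfold Dop, Cderive. simpl. try (unfold scal; simpl; unfold mult; simpl).
  f_equal. apply Derive_ext. intros; apply IHk. Qed.

Lemma Im_Dpow k (phi : R -> C) y : Im (Dpow k phi y) = DpR k (fun z => Im (phi z)) y.
Proof. revert y; induction k; intros y. reflexivity.
  change (Im (Dop (Dpow k phi) y) = / y * Derive (DpR k (fun z => Im (phi z))) y).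
  unfold Dop, Cderive. simpl. try (unfold scal; simpl; unfold mult; simpl).
  f_equal. apply Derive_ext. intros; apply IHk. Qed.

Lemma DpR_loc k phi psi : (forall y, 0 < y < 1 -> phi y = psi y) ->
  forall y, 0 < y < 1 -> DpR k phi y = DpR k psi y.
Proof. intros H; induction k; intros y Hy. apply H; auto.
  change (/ y * Derive (DpR k phi) y = / y * Derive (DpR k psi) y). f_equal.
  apply Derive_ext_loc. apply filter_imp with (2 := loc_between 0 1 y Hy). intros z Hz; apply IHk; auto. Qed.

Lemma G0_pair f (Hs : smooth_pos f) j y : y < 1 ->
  G0 f j y = (Gh (fun z => Re (f z)) j y, Gh (fun z => Im (f z)) j y).
Proof. intros Hy. unfold G0. apply (is_RInt_unique (V:=C_R_CompleteNormedModule)).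
  apply (is_RInt_fct_extend_pair (U:=R_NormedModule) (V:=R_NormedModule)).
  - eapply is_RInt_ext; [ | apply (RInt_correct (V:=R_CompleteNormedModule)); apply exR ].
    intros x _. simpl. unfold scal; simpl; unfold mult; simpl. unfold Re. ring.
    apply smooth_contpos. intros n x Hx. apply (proj1 (Hs n x Hx)). lra. lra.
  - eapply is_RInt_ext; [ | apply (RInt_correct (V:=R_CompleteNormedModule)); apply exR ].
    intros x _. simpl. unfold scal; simpl; unfold mult; simpl. unfold Im. ring.
    apply smooth_contpos. intros n x Hx. apply (proj2 (Hs n x Hx)). lra. lra.
Qed.

Lemma Re_sum (F : nat -> C) a b : Re (sum_n_m (G:=C_AbelianMonoid) F a b) = sum_n_m (G:=R_AbelianMonoid) (fun i => Re (F i)) a b.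
Proof. induction b.
  - destruct a. rewrite (sum_n_n (G:=C_AbelianMonoid)), (sum_n_n (G:=R_AbelianMonoid)). reflexivity.
    rewrite (sum_n_m_zero (G:=C_AbelianMonoid)), (sum_n_m_zero (G:=R_AbelianMonoid)) by lia. reflexivity.
  - destruct (le_lt_dec a (S b)).
    rewrite (sum_n_Sm (G:=C_AbelianMonoid)), (sum_n_Sm (G:=R_AbelianMonoid)) by lia. rewrite <- IHb. reflexivity.
    rewrite (sum_n_m_zero (G:=C_AbelianMonoid)), (sum_n_m_zero (G:=R_AbelianMonoid)) by lia. reflexivity.
Qed.

Lemma Im_sum (F : nat -> C) a b : Im (sum_n_m (G:=C_AbelianMonoid) F a b) = sum_n_m (G:=R_AbelianMonoid) (fun i => Im (F i)) a b.
Proof. induction b.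
  - destruct a. rewrite (sum_n_n (G:=C_AbelianMonoid)), (sum_n_n (G:=R_AbelianMonoid)). reflexivity.
    rewrite (sum_n_m_zero (G:=C_AbelianMonoid)), (sum_n_m_zero (G:=R_AbelianMonoid)) by lia. reflexivity.
  - destruct (le_lt_dec a (S b)).
    rewrite (sum_n_Sm (G:=C_AbelianMonoid)), (sum_n_Sm (G:=R_AbelianMonoid)) by lia. rewrite <- IHb. reflexivity.
    rewrite (sum_n_m_zero (G:=C_AbelianMonoid)), (sum_n_m_zero (G:=R_AbelianMonoid)) by lia. reflexivity.
Qed.

Lemma Re_rhs f r t : Re (rhs35 f r t) = 2 ^ r * (-1) ^ r * INR (fact r) *
    sum_n_m (G:=R_AbelianMonoid) (fun m => sum_n_m (G:=R_AbelianMonoid) (fun nu => sum_n_m (G:=R_AbelianMonoid)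
      (fun l => Xc m nu l t * Derive_n (fun y => Re (f y)) m (1 - t)) nu r) m r) 0 r.
Proof. unfold rhs35. change (Re (scal ?c ?z)) with (c * Re z). f_equal.
  rewrite Re_sum. apply sum_n_m_ext. intros m. rewrite Re_sum. apply sum_n_m_ext. intros nu.
  rewrite Re_sum. apply sum_n_m_ext. intros l. reflexivity. Qed.

Lemma Im_rhs f r t : Im (rhs35 f r t) = 2 ^ r * (-1) ^ r * INR (fact r) *
    sum_n_m (G:=R_AbelianMonoid) (fun m => sum_n_m (G:=R_AbelianMonoid) (fun nu => sum_n_m (G:=R_AbelianMonoid)
      (fun l => Xc m nu l t * Derive_n (fun y => Im (f y)) m (1 - t)) nu r) m r) 0 r.
Proof. unfold rhs35. change (Im (scal ?c ?z)) with (c * Im z). f_equal.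
  rewrite Im_sum. apply sum_n_m_ext. intros m. rewrite Im_sum. apply sum_n_m_ext. intros nu.
  rewrite Im_sum. apply sum_n_m_ext. intros l. reflexivity. Qed.

Theorem lemma3p5 (f : R -> C) (rho : R) :
  rho < 1 ->
  smooth_pos f ->
  (forall u : R, 0 <= u -> rho < u -> f u = 0) ->
  forall (r : nat) (t : R), 0 < t < 1 ->
    Cderive (Dpow r (G0 f r)) t = rhs35 f r t.
Proof.
  intros Hrho Hs Hsupp r t Ht.
  assert (HR : smoothR (fun y => Re (f y))) by (intros n x Hx; apply (proj1 (Hs n x Hx))).
  assert (HI : smoothR (fun y => Im (f y))) by (intros n x Hx; apply (proj2 (Hs n x Hx))).
  unfold Cderive. apply injective_projections.
  - change (Derive (fun y => Re (Dpow r (G0 f r) y)) t = Re (rhs35 f r t)).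
    rewrite Re_rhs, <- real_main by auto.
    apply Derive_ext_loc. apply filter_imp with (2 := loc_between 0 1 t Ht). intros y Hy.
    rewrite Re_Dpow. apply DpR_loc; auto. intros z Hz. rewrite G0_pair by (auto; lra). reflexivity.
  - change (Derive (fun y => Im (Dpow r (G0 f r) y)) t = Im (rhs35 f r t)).
    rewrite Im_rhs, <- real_main by auto.
    apply Derive_ext_loc. apply filter_imp with (2 := loc_between 0 1 t Ht). intros y Hy.
    rewrite Im_Dpow. apply DpR_loc; auto. intros z Hz. rewrite G0_pair by (auto; lra). reflexivity.
Qed.
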